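(* Let $N\ge1$ and let $\Upsilon_N:=\{\alpha\in\mathbb N_0^s:\prod_{j=1}^s(\alpha_j+1)\le N\}$ (the hyperbolic cross of order $N$). Then $\Upsilon_N$ is a minimal monomial degree reducing universal interpolation set of order $N$: it is a monomial degree reducing universal interpolation set of order $N$, and every monomial degree reducing universal interpolation set of order $N$ contains $\Upsilon_N$.
   Context: $\Pi=\mathbb C[x_1,\dots,x_s]$, $\deg$ is total degree with $\deg 0<0$. For $A\subset\mathbb N_0^s$, $\Pi_A$ is the span of the monomials $x^\alpha$, $\alpha\in A$. A subspace $\mathcal P\subseteq\Pi$ is a degree reducing universal interpolation space of order $N$ if for every finite $X\subset\mathbb C^s$ with $\#X\le N$ and every $q\in\Pi$ there is $p\in\mathcal P$ with $p|_X=q|_X$ and $\deg p\le\deg q$. A set $A\subset\mathbb N_0^s$ is a monomial degree reducing universal interpolation set of order $N$ if $\Pi_A$ is a degree reducing universal interpolation space of order $N$. *)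

(* Defs.v *)
From mathcomp Require Import all_boot all_algebra.
From mathcomp Require Import Rstruct.
From mathcomp.real_closed Require Import complex.
From mathcomp Require Export mpoly.
Set Implicit Arguments. Unset Strict Implicit. Unset Printing Implicit Defensive.
Local Open Scope ring_scope.

Definition C : numClosedFieldType := complex Rdefinitions.R.

(* Total degree with deg 0 < 0 is encoded by msize p = deg p + 1 (msize 0 = 0),
   so  deg p <= deg q  <->  msize p <= msize q. *)

Definition in_PiA (s : nat) (A : 'X_{1..s} -> Prop) (p : {mpoly C[s]}) : Prop :=
  forall m : 'X_{1..s}, m \in msupp p -> A m.

(* degree reducing universal interpolation space of order N;
   a finite set X of at most N points of C^s is a duplicate-free list of row vectors
   (a point x in C^s is the row vector x, with coordinates x ord0 i). *)
Definition DR_universal_interp_space (s : nat) (P : {mpoly C[s]} -> Prop)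
    (N : nat) : Prop :=
  forall (X : seq 'rV[C]_s) (q : {mpoly C[s]}),
    uniq X -> (size X <= N)%N ->
    exists p : {mpoly C[s]},
      [/\ P p, (forall x, x \in X -> p.@[x ord0] = q.@[x ord0]) & (msize p <= msize q)%N].

Definition monomial_DR_universal_interp_set (s : nat) (A : 'X_{1..s} -> Prop)
    (N : nat) : Prop :=
  DR_universal_interp_space (@in_PiA s A) N.

Definition hyperbolic_cross (s N : nat) (m : 'X_{1..s}) : Prop :=
  (\prod_(j < s) (m j + 1) <= N)%N.
Arguments hyperbolic_cross : clear implicits.

(* Main.v *)
Require Import Defs.
From mathcomp Require Import all_boot all_algebra.
From mathcomp Require Import mpoly.
Import order.Order.TTheory GRing.Theory Num.Theory.
Import order.Order.Syntax.
Delimit Scope order_scope with O.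
Open Scope ring_scope.
From Stdlib Require Import Classical.
Set Implicit Arguments. Unset Strict Implicit. Unset Printing Implicit Defensive.

Lemma dim_rowC n : \dim (fullv : {vspace 'rV[C]_n}) = n.
Proof. by rewrite dimvf /dim /= mul1n. Qed.

Definition ev s (X : seq 'rV[C]_s) (a : 'X_{1..s}) : 'rV[C]_(size X) :=
  \row_(i < size X) \prod_(j < s) ((nth 0 X i) ord0 j) ^+ a j.

Definition evp s (X : seq 'rV[C]_s) (p : {mpoly C[s]}) : 'rV[C]_(size X) :=
  \row_(i < size X) p.@[(nth 0 X i) ord0].

Lemma evpX s X (a : 'X_{1..s}) : evp X 'X_[a] = ev X a.
Proof. by apply/rowP=> i; rewrite !mxE mevalX. Qed.

Lemma evpD s X (p q : {mpoly C[s]}) : evp X (p + q) = evp X p + evp X q.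
Proof. by apply/rowP=> i; rewrite !mxE mevalD. Qed.

Lemma evpZ s X c (p : {mpoly C[s]}) : evp X (c *: p) = c *: evp X p.
Proof. by apply/rowP=> i; rewrite !mxE mevalZ. Qed.

Lemma evp0 s X : evp X (0 : {mpoly C[s]}) = 0.
Proof. by apply/rowP=> i; rewrite !mxE meval0. Qed.

Lemma ev_add s X (a d : 'X_{1..s}) : ev X (a + d)%MM = ev X a *m diag_mx (ev X d).
Proof.
apply/rowP=> i; rewrite mul_mx_diag !mxE -big_split /=.
by apply: eq_bigr => j _; rewrite mnmDE exprD.
Qed.

Lemma span_mul n k (T : seq 'rV[C]_n) (D : 'M[C]_(n, k)) v :
  v \in <<T>>%VS -> v *m D \in <<map (mulmxr D) T>>%VS.
Proof.
move=> vT; have := memv_img (linfun (mulmxr D)) vT.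
by rewrite limg_span lfunE /=; under eq_map do rewrite lfunE.
Qed.

Definition red s (X : seq 'rV[C]_s) (a : 'X_{1..s}) :=
  exists t : seq 'X_{1..s}, all (fun b : 'X_{1..s} => (b < a)%O) t /\ ev X a \in <<map (ev X) t>>%VS.

Lemma red_add s X (a d : 'X_{1..s}) : red X a -> red X (a + d)%MM.
Proof.
case=> t [Ht Hin]; exists (map (fun b => b + d)%MM t); split.
  by rewrite all_map; apply/sub_all: Ht => b /=; rewrite ltmc_add2l.
rewrite ev_add.
have -> : [seq ev X x | x <- [seq (b + d)%MM | b <- t]] = map (mulmxr (diag_mx (ev X d))) (map (ev X) t).
  by rewrite -!map_comp; apply: eq_map => b /=; rewrite ev_add.
exact: span_mul.
Qed.

Lemma big_le_narrow (R : Type) (idx : R) (op : Monoid.com_law idx) M a (F : nat -> R) :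
  (a < M)%N -> \big[op/idx]_(k < M | (k <= a)%N) F k = \big[op/idx]_(k < a.+1) F k.
Proof.
move=> aM; rewrite -(big_mkord (fun k => (k <= a)%N)) -[RHS](big_mkord xpredT).
rewrite (big_cat_nat (leq0n a.+1) aM) /=.
have -> : \big[op/idx]_(a.+1 <= i < M | (i <= a)%N) F i = idx.
  rewrite big_nat_cond big1 // => i /andP[/andP[ai _] ia].
  by move: (leq_trans ai ia); rewrite ltnn.
rewrite Monoid.mulm1.
rewrite big_nat_cond [RHS]big_nat_cond; apply: eq_bigl => i.
by rewrite andbT ltnS -andbA andbb.
Qed.

Lemma card_le_ord M a : (a < M)%N -> #|[pred k : 'I_M | (k <= a)%N]| = a.+1.
Proof.
move=> aM; rewrite -sum1_card.
by rewrite (@big_le_narrow nat 0%N addn M a (fun _ => 1%N) aM) sum1_card card_ord.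
Qed.

Definition boxF s (a : 'X_{1..s}) (j : 'I_s) := [pred k : 'I_(mdeg a).+1 | (k <= a j)%N].

Lemma mnm_le_mdeg s (a : 'X_{1..s}) j : (a j <= mdeg a)%N.
Proof. by rewrite mdegE (bigD1 j) //= leq_addr. Qed.

Lemma card_box s (a : 'X_{1..s}) : #|family (boxF a)| = (\prod_(j < s) (a j).+1)%N.
Proof.
rewrite card_family foldrE big_map big_enum /=.
by apply: eq_bigr => j _; rewrite card_le_ord // ltnS mnm_le_mdeg.
Qed.

Definition mk s M (f : {ffun 'I_s -> 'I_M}) : 'X_{1..s} := [multinom (f j : nat) | j < s].

Lemma mk_inj s M : injective (@mk s M).
Proof.
move=> f g /mnmP h; apply/ffunP => j; apply/val_inj; have := h j.
by rewrite !mnmE.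
Qed.

Lemma free_size n (S : seq 'rV[C]_n) : free S -> (size S <= n)%N.
Proof.
move/eqP <-; have := dimvS (subvf <<S>>%VS); by rewrite dim_rowC.
Qed.

Lemma free_sorted s X (L : seq 'X_{1..s}) :
  sorted (fun x y => (y <= x)%O) L -> uniq L -> (forall b, b \in L -> ~ red X b) ->
  free (map (ev X) L).
Proof.
elim: L => [|b L IH] /=; first by rewrite nil_free.
move=> Hs /andP[bL uL] Hr; rewrite free_cons IH ?(path_sorted Hs) ?andbT //; last first.
  by move=> c cL; apply: Hr; rewrite inE cL orbT.
apply/negP => Hin; apply: (Hr b (mem_head _ _)); exists L; split => //.
have : all (fun y => (y <= b)%O) L.
  by apply: (order_path_min _ Hs) => x y z /= h1 h2; exact: le_trans h2 h1.
move/allP => H; apply/allP => y yL; rewrite lt_neqAle H // andbT.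
by apply: contraNneq bL => <-.
Qed.

Lemma nonred_lower s X (a b : 'X_{1..s}) : (b <= a)%MM -> ~ red X a -> ~ red X b.
Proof.
move=> ba Ha Hb; apply: Ha; have := red_add (a - b)%MM Hb.
by rewrite addmC submK.
Qed.

Lemma nonred_hc s N X (a : 'X_{1..s}) : (size X <= N)%N -> ~ red X a -> hyperbolic_cross s N a.
Proof.
move=> XN Ha; rewrite /hyperbolic_cross.
set L0 := map (@mk s (mdeg a).+1) (enum (family (boxF a))).
have sL0 : size L0 = (\prod_(j < s) (a j).+1)%N by rewrite size_map -cardE card_box.
have uL0 : uniq L0 by rewrite map_inj_uniq ?enum_uniq //; apply: mk_inj.
have HL0 : forall b, b \in L0 -> ~ red X b.
  move=> b /mapP[f]; rewrite mem_enum => /familyP Hf ->; apply: (nonred_lower _ Ha).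
  by apply/mnm_lepP => j; rewrite mnmE; have := Hf j.
set L := sort (fun x y : 'X_{1..s} => (y <= x)%O) L0.
have pL : perm_eq L L0 by rewrite perm_sort.
have := @free_sorted s X L.
rewrite sort_sorted; last by move=> x y; apply: le_total.
rewrite (perm_uniq pL) uL0 => /(_ isT isT).
have H : forall b, b \in L -> ~ red X b.
  by move=> b; rewrite (perm_mem pL); apply: HL0.
move=> /(_ H) /free_size; rewrite size_map (perm_size pL) sL0 => h.
under eq_bigr do rewrite addn1.
exact: leq_trans h XN.
Qed.

Definition Good s N (X : seq 'rV[C]_s) B (v : 'rV[C]_(size X)) :=
  exists p : {mpoly C[s]},
    [/\ in_PiA (hyperbolic_cross s N) p, evp X p = v & (msize p <= B)%N].

Lemma in_PiA0 s A : @in_PiA s A 0.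
Proof. by move=> m; rewrite msupp0. Qed.

Lemma in_PiAD s A (p q : {mpoly C[s]}) : in_PiA A p -> in_PiA A q -> in_PiA A (p + q).
Proof.
move=> hp hq m; rewrite mcoeff_msupp mcoeffD.
have [h|h] := eqVneq p@_m 0; first by rewrite h add0r -mcoeff_msupp; apply: hq.
by move=> _; apply: hp; rewrite mcoeff_msupp.
Qed.

Lemma in_PiAZ s A c (p : {mpoly C[s]}) : in_PiA A p -> in_PiA A (c *: p).
Proof.
move=> hp m; rewrite mcoeff_msupp mcoeffZ => h; apply: hp; rewrite mcoeff_msupp.
by apply: contraNneq h => ->; rewrite mulr0.
Qed.

Lemma Good0 s N X B : @Good s N X B 0.
Proof. by exists 0; split; [apply: in_PiA0 | apply: evp0 | rewrite msize0]. Qed.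

Lemma GoodD s N X B u v : @Good s N X B u -> Good N B v -> Good N B (u + v).
Proof.
case=> p [hp ep sp] [q [hq eq sq]]; exists (p + q); split.
- exact: in_PiAD.
- by rewrite evpD ep eq.
- by apply: leq_trans (msizeD_le _ _) _; rewrite geq_max sp sq.
Qed.

Lemma GoodZ s N X B c v : @Good s N X B v -> Good N B (c *: v).
Proof.
case=> p [hp ep sp]; exists (c *: p); split.
- exact: in_PiAZ.
- by rewrite evpZ ep.
- exact: leq_trans (msizeZ_le _ _) sp.
Qed.

Lemma span_good s N X B (T : seq 'rV[C]_(size X)) :
  (forall v, v \in T -> @Good s N X B v) -> forall v, v \in <<T>>%VS -> Good N B v.
Proof.
elim: T => [|w T IH] HT v.
  by rewrite span_nil memv0 => /eqP ->; apply: Good0.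
rewrite span_cons => /memv_addP[u /vlineP[k ->] [v' v'T ->]].
apply: GoodD; first by apply: GoodZ; apply: HT; rewrite mem_head.
by apply: IH => // x xT; apply: HT; rewrite inE xT orbT.
Qed.

Lemma good_mono s N X (a : 'X_{1..s}) : (size X <= N)%N -> Good N (mdeg a).+1 (ev X a).
Proof.
move=> XN; induction a as [a IH] using (well_founded_induction (@ltom_wf s)).
case: (classic (red X a)) => [[t [Ht Hin]]|Hn].
  apply: (span_good _ Hin) => v /mapP[b bt ->].
  have ba : (b < a)%O by move/allP: Ht => /(_ b bt).
  case: (IH b ba) => p [hp ep sp]; exists p; split => //.
  by apply: leq_trans sp _; rewrite ltnS lemc_mdeg // ltW.
exists 'X_[a]; split; last by rewrite msizeX.
- by move=> m; rewrite msuppX inE => /eqP ->; apply: nonred_hc Hn.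
- by rewrite evpX.
Qed.

Lemma good_sum s N X B (r : seq 'X_{1..s}) (c : 'X_{1..s} -> C) :
  (size X <= N)%N -> (forall m, m \in r -> (mdeg m < B)%N) ->
  Good N B (evp X (\sum_(m <- r) c m *: 'X_[m])).
Proof.
move=> XN; elim: r => [|m r IH] Hr; first by rewrite big_nil evp0; apply: Good0.
rewrite big_cons evpD evpZ evpX; apply: GoodD; last first.
  by apply: IH => x xr; apply: Hr; rewrite inE xr orbT.
apply: GoodZ; have [p [hp ep sp]] := good_mono m XN.
exists p; split => //; apply: leq_trans sp _; apply: Hr; exact: mem_head.
Qed.

Theorem part1 s N : monomial_DR_universal_interp_set (hyperbolic_cross s N) N.
Proof.
move=> X q _ XN.
have [p [hp ep sp]] : Good N (msize q) (evp X q).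
  have := @good_sum s N X (msize q) (msupp q) (fun m => q@_m) XN.
  by rewrite -mpolyE; apply=> m; exact: msize_mdeg_lt.
exists p; split => // x xX.
have ix : (index x X < size X)%N by rewrite index_mem.
have := congr1 (fun v : 'rV_(size X) => v ord0 (Ordinal ix)) ep.
by rewrite /= !mxE /= (nth_index _ xX).
Qed.
Definition Vd a : 'M[C]_a.+1 := Vandermonde a.+1 (\row_(i < a.+1) (i%:R : C)).
Definition Wv a : 'cV[C]_a.+1 := invmx (Vd a) *m delta_mx ord_max 0.
Definition W a (k : nat) : C := Wv a (inord k) 0.

Lemma Vd_unit a : Vd a \in unitmx.
Proof.
rewrite unitmxE unitfE det_Vandermonde; apply/prodf_neq0 => i _.
apply/prodf_neq0 => j ij.
by rewrite !mxE subr_eq0 eqr_nat; apply: contraTneq ij => ->; rewrite ltnn.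
Qed.

Lemma W_prop a e : (e <= a)%N -> \sum_(k < a.+1) W a k * (k%:R)^+e = (e == a)%:R.
Proof.
move=> ea; have := congr1 (fun M : 'cV[C]_a.+1 => M (inord e) 0) (mulKVmx (Vd_unit a) (delta_mx ord_max 0)).
rewrite /= !mxE -/(Wv a) eqxx andbT.
have -> : (inord e == ord_max :> 'I_a.+1) = (e == a) by rewrite -val_eqE /= inordK // ltnS.
move=> <-; apply: eq_bigr => k _.
by rewrite /W inord_val /Vd /Vandermonde !mxE inordK ?ltnS // mulrC.
Qed.


Definition pt s M (f : {ffun 'I_s -> 'I_M}) : 'rV[C]_s := \row_j ((f j : nat)%:R).

Definition Lam s (m : 'X_{1..s}) (g : {mpoly C[s]}) : C :=
  \sum_(f in family (boxF m)) (\prod_j W (m j) (f j)) * g.@[pt f ord0].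

Lemma LamX s (m g : 'X_{1..s}) :
  Lam m 'X_[g] = \prod_j \sum_(k < (m j).+1) W (m j) k * k%:R ^+ g j.
Proof.
transitivity (\prod_j \sum_(k : 'I_(mdeg m).+1 | boxF m j k) W (m j) k * k%:R ^+ g j).
  rewrite bigA_distr_big_dep; apply: eq_bigr => f _; rewrite mevalX -big_split.
  by apply: eq_bigr => j _; rewrite !mxE.
apply: eq_bigr => j _.
rewrite (@big_le_narrow C 0 +%R (mdeg m).+1 (m j) (fun k => W (m j) k * k%:R ^+ g j)) //.
by rewrite ltnS mnm_le_mdeg.
Qed.

Lemma Lam_sum s (m : 'X_{1..s}) (r : seq 'X_{1..s}) (c : 'X_{1..s} -> C) :
  Lam m (\sum_(g <- r) c g *: 'X_[g]) = \sum_(g <- r) c g * Lam m 'X_[g].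
Proof.
elim: r => [|g r IH]; first by rewrite !big_nil /Lam big1 // => f _; rewrite meval0 mulr0.
rewrite !big_cons -IH /Lam mulr_sumr -big_split /=; apply: eq_bigr => f _.
by rewrite mevalD mevalZ mulrDr mulrCA.
Qed.

Lemma exists_lt s (g m : 'X_{1..s}) : (mdeg g <= mdeg m)%N -> g != m -> exists j, (g j < m j)%N.
Proof.
move=> dg ne; apply: NNPP => H.
have le : (m <= g)%MM.
  by apply/mnm_lepP => j; rewrite leqNgt; apply/negP => h; apply: H; exists j.
have e := submK le.
have : mdeg (g - m)%MM = 0%N.
  by move: dg; rewrite -{1}e mdegD; case: (mdeg (g - m)%MM) => // k; rewrite addSn ltnNge leq_addl.
move/eqP; rewrite mdeg_eq0 => /eqP h; move: e; rewrite h add0m => e.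
by move/eqP: ne; apply; rewrite e.
Qed.

Theorem part2 s N (A : 'X_{1..s} -> Prop) :
  monomial_DR_universal_interp_set A N ->
  forall m : 'X_{1..s}, hyperbolic_cross s N m -> A m.
Proof.
move=> HA m Hm; apply: NNPP => nAm.
set G := family (boxF m).
set X := map (@pt s (mdeg m).+1) (enum G).
have uX : uniq X.
  rewrite map_inj_uniq ?enum_uniq // => f g /rowP h; apply/ffunP => j.
  by apply/val_inj/eqP; have := h j; rewrite !mxE => /eqP; rewrite eqr_nat.
have sX : (size X <= N)%N.
  rewrite size_map -cardE card_box; apply: leq_trans Hm.
  by rewrite leq_eqVlt; apply/orP; left; apply/eqP; apply: eq_bigr => j _; rewrite addn1.
have [p [hp ep sp]] := HA X 'X_[m] uX sX.
have L1 : Lam m 'X_[m] = 1.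
  by rewrite LamX big1 // => j _; rewrite W_prop // eqxx.
have L2 : Lam m p = Lam m 'X_[m].
  apply: eq_bigr => f fG; congr (_ * _); apply: ep.
  by apply: map_f; rewrite mem_enum.
have L0 : Lam m p = 0.
  rewrite (mpolyE p) Lam_sum big1_seq // => g /andP[_ gp].
  have ng : g != m by apply/eqP => e; apply: nAm; rewrite -e; apply: hp.
  have dg : (mdeg g <= mdeg m)%N.
    by rewrite -ltnS; apply: leq_trans (msize_mdeg_lt gp) _; rewrite -(msizeX C).
  have [j gj] := exists_lt dg ng.
  rewrite LamX (bigD1 j) //= W_prop ?(ltnW gj) // (ltn_eqF gj) mul0r mulr0 //.
by move: L2; rewrite L0 L1 => /esym/eqP; rewrite oner_eq0.
Qed.

Theorem corollary23 (s N : nat) : (1 <= N)%N ->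
  monomial_DR_universal_interp_set (hyperbolic_cross s N) N /\
  (forall A : 'X_{1..s} -> Prop,
     monomial_DR_universal_interp_set A N ->
     forall m : 'X_{1..s}, hyperbolic_cross s N m -> A m).
Proof.
move=> _; split; first exact: part1.
exact: part2.
Qed.
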